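(* Let $(X,T)$ be a minimal Cantor system which is topologically conjugate via $\varphi:X\to U$ to the induced system $(U,T_U)$, where $U\subsetneq X$ is clopen. Then for every $k\ge0$, the restriction $\varphi|_{\varphi^k(X)}$ is a conjugacy from the induced system $(\varphi^k(X),T_{\varphi^k(X)})$ to the induced system $(\varphi^{k+1}(X),T_{\varphi^{k+1}(X)})$. In particular $(X,T)$ and $(\varphi^k(X),T_{\varphi^k(X)})$ are conjugate by $\varphi^k$.
   Context: A minimal Cantor system is a pair $(X,T)$, $X$ a Cantor set, $T$ a homeomorphism with all orbits dense. For a clopen $V\subset X$, $r_V(x)=\inf\{n>0:T^nx\in V\}$ and the induced map is $T_V:V\to V$, $T_V(x)=T^{r_V(x)}(x)$. *)

(* Defs.v *)
From HB Require Import structures.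
From mathcomp Require Import all_boot all_order all_algebra.
From mathcomp Require Import all_classical all_reals topology cantor.
Set Implicit Arguments. Unset Strict Implicit. Unset Printing Implicit Defensive.
Local Open Scope classical_set_scope.

Definition homeomorphism {X : topologicalType} (T : X -> X) : Prop :=
  exists g : X -> X, [/\ cancel T g, cancel g T, continuous T & continuous g].

Definition orbit {X : Type} (T : X -> X) (x : X) : set X :=
  [set y | exists n : nat, iter n T x = y \/ iter n T y = x].

Definition minimal_system {X : topologicalType} (T : X -> X) : Prop :=
  homeomorphism T /\ forall x : X, closure (orbit T x) = [set: X].

(* r_V(x) = inf { n > 0 : T^n x \in V }; when this set is empty we set it
   to 0 (the induced map is then the identity at x; this never happens for
   x in a nonempty clopen V of a minimal system). *)
Definition return_time {X : Type} (T : X -> X) (V : set X) (x : X) : nat :=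
  xget 0%N [set n : nat | [/\ (0 < n)%N, V (iter n T x) &
     forall m : nat, (0 < m)%N -> V (iter m T x) -> (n <= m)%N]].

Definition induced {X : Type} (T : X -> X) (V : set X) : X -> X :=
  fun x => iter (return_time T V x) T x.

Definition conj_on {X : topologicalType} (V W : set X) (S R f : X -> X) : Prop :=
  [/\ set_bij V W f,
      {within V, continuous f},
      (exists g : X -> X, [/\ {within W, continuous g},
          {in V, forall x, g (f x) = x} &
          {in W, forall y, f (g y) = y}]) &
      {in V, forall x, f (S x) = R (f x)}].

(* Main.v *)
Require Import Defs.
From HB Require Import structures.
From mathcomp Require Import all_boot all_order all_algebra.
From mathcomp Require Import all_classical all_reals topology cantor.
From mathcomp Require Import zify.
Set Implicit Arguments. Unset Strict Implicit. Unset Printing Implicit Defensive.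
Local Open Scope classical_set_scope.

Section Comb.
Variable X : Type.

Lemma rt_spec (T : X -> X) V x n : (0 < n)%N -> V (iter n T x) ->
  (forall m, (0 < m)%N -> V (iter m T x) -> (n <= m)%N) -> return_time T V x = n.
Proof.
move=> n0 Vn mn; apply: xget_unique; first by split.
move=> m [m0 Vm mm]; apply/eqP; rewrite eqn_leq mn // mm //.
Qed.

Lemma rt_none (T : X -> X) V x : (forall n, (0 < n)%N -> ~ V (iter n T x)) ->
  return_time T V x = 0%N.
Proof. by move=> H; apply: xgetPN => n [n0 Vn _]; exact: (H n n0 Vn). Qed.

Lemma rt_ex (T : X -> X) V x : (exists n, (0 < n)%N /\ V (iter n T x)) ->
  [/\ (0 < return_time T V x)%N, V (iter (return_time T V x) T x) &
     forall m, (0 < m)%N -> V (iter m T x) -> (return_time T V x <= m)%N].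
Proof.
move=> H; have H' : exists n, (0 < n)%N && `[< V (iter n T x)>].
  by case: H => n [n0 Vn]; exists n; rewrite n0; apply/asboolP.
case: (ex_minnP H') => n /andP[n0 /asboolP Vn] nmin.
have nm : forall m, (0 < m)%N -> V (iter m T x) -> (n <= m)%N.
  by move=> m m0 Vm; apply: nmin; rewrite m0; apply/asboolP.
by rewrite (@rt_spec T V x n).
Qed.

Lemma induced_transport (T S phi : X -> X) V :
  injective phi -> (forall x, phi (T x) = S (phi x)) ->
  forall x, induced S (phi @` V) (phi x) = phi (induced T V x).
Proof.
move=> inj comm x.
have iterC n : iter n S (phi x) = phi (iter n T x).
  by elim: n => //= n ->; rewrite comm.
have memE z : (phi @` V) (phi z) = V z.
  by rewrite propeqE; split => [[w Vw /inj <-]|Vz] //; exists z.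
rewrite /induced /return_time.
have -> : [set n : nat | [/\ (0 < n)%N, (phi @` V) (iter n S (phi x))
   & forall m : nat, (0 < m)%N -> (phi @` V) (iter m S (phi x)) -> (n <= m)%N]]
  = [set n : nat | [/\ (0 < n)%N, V (iter n T x)
   & forall m : nat, (0 < m)%N -> V (iter m T x) -> (n <= m)%N]].
  apply/funext => n; apply/propext; split.
    move=> [n0 Vn H]; split => //; first by rewrite -memE -iterC.
    by move=> m m0 Vm; apply: H => //; rewrite iterC memE.
  move=> [n0 Vn H]; split => //; first by rewrite iterC memE.
  by move=> m m0 Vm; apply: H => //; rewrite -memE -iterC.
by rewrite iterC.
Qed.

Lemma induced_induced (T : X -> X) U W :
  (forall y, U y -> exists n, (0 < n)%N /\ U (iter n T y)) ->
  W `<=` U -> forall y, U y -> induced (induced T U) W y = induced T W y.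
Proof.
move=> ret WU y Uy.
pose S := induced T U.
have SU z : U z -> U (S z) /\ (forall m, (0 < m)%N -> U (iter m T z) -> (return_time T U z <= m)%N)
   /\ (0 < return_time T U z)%N.
  by move=> Uz; case: (rt_ex (ret z Uz)) => a b c.
pose s := fix s n := if n is n'.+1 then (s n' + return_time T U (iter (s n') T y))%N else 0%N.
have s0 : s 0%N = 0%N by [].
have sS n : s n.+1 = (s n + return_time T U (iter (s n) T y))%N by [].
clearbody s.
have sE n : iter n S y = iter (s n) T y /\ U (iter (s n) T y).
  elim: n => [|n [IH Us]]; first by rewrite s0.
  rewrite iterS IH sS.
  have := SU _ Us; rewrite /S /induced -iterD addnC => -[Ux _]; split => //.
have sinc n : (s n < s n.+1)%N.
  by rewrite sS -[X in (X < _)%N]addn0 ltn_add2l; case: (SU _ (sE n).2) => _ [].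
have smono : {mono s : m n / (m <= n)%N}.
  by apply: leq_mono; apply: homo_ltn sinc; exact: ltn_trans.
have sge n : (n <= s n)%N.
  by elim: n => // n IH; apply: leq_ltn_trans IH (sinc n).
have scov m : (0 < m)%N -> U (iter m T y) -> exists2 n, (0 < n)%N & s n = m.
  move=> m0 Um.
  suff: forall N, (m < s N)%N -> exists n, s n = m.
    move=> /(_ m.+1 (sge _)) [n sn]; exists n => //.
    by case: n sn => [|//]; rewrite s0 => sn; rewrite -sn in m0.
  elim => [|N IH mN]; first by rewrite s0.
  case: (ltnP m (s N)) => [/IH//|sNm]; exists N.
  apply/eqP; rewrite eqn_leq sNm /= leqNgt; apply/negP => ltm.
  have [_ [mn _]] := SU _ (sE N).2.
  have := mn (m - s N)%N; rewrite subn_gt0 ltm -iterD subnK; last exact: ltnW.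
  move=> /(_ isT Um); move: mN; rewrite sS; lia.
case: (pselect (exists n, (0 < n)%N /\ W (iter n T y))) => [ex|nex].
  case: (rt_ex ex) => t0 Wt tmin.
  have [n n0 sn] := scov _ t0 (WU _ Wt).
  have nmin : forall m, (0 < m)%N -> W (iter m (induced T U) y) -> (n <= m)%N.
    move=> m m0; rewrite (sE m).1 => Wm; rewrite -smono sn; apply: tmin => //.
    by apply: leq_trans (sge m).
  have Wn : W (iter n (induced T U) y) by rewrite (sE n).1 sn.
  rewrite /induced (@rt_spec (induced T U) W y n) //.
  by rewrite (sE n).1 sn.
have h1 : return_time T W y = 0%N.
  by apply: rt_none => n n0 Wn; apply: nex; exists n; split.
have h2 : return_time (induced T U) W y = 0%N.
  apply: rt_none => n n0; rewrite -/S (sE n).1 => Wn; apply: nex; exists (s n); split => //.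
  by apply: leq_trans (sge n).
by rewrite /induced h1 h2.
Qed.

End Comb.
Lemma within_comp {X Y Z : topologicalType} (A : set X) (B : set Y) (f : X -> Y) (h : Y -> Z) :
  {within A, continuous f} -> (forall x, A x -> B (f x)) -> {within B, continuous h} ->
  {within A, continuous (h \o f)}.
Proof.
move=> /subspace_continuousP cf fAB /subspace_continuousP ch.
apply/subspace_continuousP => x Ax.
apply: cvg_trans (ch _ (fAB _ Ax)).
have : f @ within A (nbhs x) --> within B (nbhs (f x)).
  move=> W /= WB.
  have := cf _ Ax _ WB; rewrite /within /= nbhs_simpl.
  apply: (@filterS _ (nbhs x)) => z + Az => /(_ Az); apply; exact: fAB.
move=> H; apply: (cvg_trans _ (cvg_fmap2 H)).
by [].
Qed.

Lemma iter_injective {X : Type} (f : X -> X) n : injective f -> injective (iter n f).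
Proof. by move=> inj; elim: n => //= n IH x y /inj /IH. Qed.

Theorem mainTheorem10 (T : cantor_space -> cantor_space)
  (U : set cantor_space) (phi : cantor_space -> cantor_space) :
  minimal_system T ->
  clopen U -> U != [set: cantor_space] ->
  conj_on [set: cantor_space] U T (induced T U) phi ->
  forall k : nat,
    conj_on (iter k phi @` [set: cantor_space]) (iter k.+1 phi @` [set: cantor_space])
      (induced T (iter k phi @` [set: cantor_space]))
      (induced T (iter k.+1 phi @` [set: cantor_space])) phi /\
    conj_on [set: cantor_space] (iter k phi @` [set: cantor_space])
      T (induced T (iter k phi @` [set: cantor_space])) (iter k phi).
Proof.
move=> [[Tinv [TK KT Tc Tic]] dense] _ _ [[mapU injU surjU] phic [g [gc gK phiK]] comm0].
have injphi : injective phi.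
  by move=> x y; apply: injU; rewrite in_setE.
have phimap x : U (phi x) by exact: mapU.
have comm x : phi (T x) = induced T U (phi x) by apply: comm0; rewrite in_setE.
have gphi x : g (phi x) = x by apply: gK; rewrite in_setE.
have phig y : U y -> phi (g y) = y by move=> Uy; apply: phiK; rewrite in_setE.
have phict : continuous phi by apply/continuous_subspace_setT.
pose V k := iter k phi @` [set: cantor_space].
have VsubU k : V k.+1 `<=` U by move=> y [x _ <-]; exact: phimap.
have phiV k : phi @` V k = V k.+1.
  apply/seteqP; split => y.
    by move=> [z [x _ <-] <-]; exists x.
  by move=> [x _ <-]; exists (iter k phi x) => //; exists x.
have ret y : U y -> exists n, (0 < n)%N /\ U (iter n T y).
  move=> Uy; apply: contrapT => nex.
  have r0 : return_time T U y = 0%N.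
    by apply: rt_none => n n0 Un; apply: nex; exists n.
  have [x _ yx] := surjU _ Uy.
  have Tx : T x = x.
    by apply: injphi; rewrite comm yx /induced r0.
  have orb : Defs.orbit T x = [set x].
    apply/seteqP; split => z; last by move=> ->; exists 0%N; left.
    move=> [n [<-|Hn]]; first by elim: n => //= n ->.
    have itx : iter n T x = x by elim: n {Hn} => //= n ->.
    have inj := iter_injective (n:=n) (can_inj TK); change (z = x); apply: inj; by rewrite Hn itx.
  have cl : closure [set x] = [set x].
    apply/esym/closure_id; apply: accessible_closed_set1.
    exact/hausdorff_accessible/cantor_space_hausdorff.
  have := dense x; rewrite orb cl => H.
  have h1 : [set x] ((fun _ : nat => true) : cantor_space) by rewrite H.
  have h2 : [set x] ((fun _ : nat => false) : cantor_space) by rewrite H.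
  have := congr1 (fun f : cantor_space => f 0%N) (etrans h1 (esym h2)).
  by [].
have C1 k x : phi (induced T (V k) x) = induced T (V k.+1) (phi x).
  rewrite -(induced_transport (V k) injphi comm) phiV.
  exact: (induced_induced ret (VsubU k) (phimap x)).
have C2 k x : iter k phi (T x) = induced T (V k) (iter k phi x).
  elim: k x => [|k IH] x.
    rewrite /induced (@rt_spec _ T (V 0%N) x 1%N) //.
    by exists (iter 1 T x).
  by rewrite iterS IH C1 -iterS.
have iterphict k : continuous (iter k phi).
  elim: k => [|k IH] x; first exact: cvg_id.
  exact: (continuous_comp (IH x) (phict _)).
move=> k; split.
  split.
  - split.
    + by move=> x [z _ <-]; exists z => //; rewrite iterS.
    + by move=> x y _ _; exact: injphi.
    + move=> y [z _ <-]; exists (iter k phi z); first by exists z.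
      by rewrite iterS.
  - exact: continuous_subspaceT.
  - exists g; split.
    + exact: continuous_subspaceW (VsubU k) gc.
    + by move=> x _; exact: gphi.
    + by move=> y; rewrite in_setE => /VsubU; exact: phig.
  - by move=> x _; exact: C1.
split.
- split.
  + by move=> x _; exists x.
  + move=> x y _ _; exact: (iter_injective (n:=k) injphi).
  + by move=> y [x _ <-]; exists x.
- exact: continuous_subspaceT.
- exists (iter k g); split.
  + elim: k => [|k IH].
      exact: continuous_subspaceT (fun x => cvg_id).
    have -> : iter k.+1 g = iter k g \o g by apply/funext => y; rewrite iterSr.
    apply: within_comp IH.
      exact: continuous_subspaceW (VsubU k) gc.
    by move=> y [x _ <-]; rewrite iterS gphi; exists x.
  + move=> x _; elim: k => [//|k IH]; by rewrite (iterSr k g) (iterS k phi) gphi.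
  + move=> y; rewrite in_setE => -[x _ <-].
    have -> : iter k g (iter k phi x) = x.
      by elim: k => [//|k IH]; rewrite (iterSr k g) (iterS k phi) gphi.
    by [].
- by move=> x _; exact: C2.
Qed.
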